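(* For $m>0$ consider the soft second-price mechanism on $n$ users with bids $\mathbf b=(b_1,\dots,b_n)$: \[a_i(\mathbf b)=\frac{e^{mb_i}}{\sum_{j=1}^n e^{mb_j}},\qquad p_i(\mathbf b)=b_i-\frac{\sum_{j=1}^n e^{mb_j}}{m e^{mb_i}}\ln\frac{\sum_{j=1}^n e^{mb_j}}{1+\sum_{j\ne i}e^{mb_j}}.\] Suppose the bids are distinct and lie in $(0,1)$, and let $b_{(1)}>b_{(2)}>\cdots>b_{(n)}$ be the bids in decreasing order. Then \[\lim_{m\to+\infty}a_i(\mathbf b)=\begin{cases}1,&b_i=b_{(1)}\\0,&b_i\ne b_{(1)}\end{cases},\qquad \lim_{m\to+\infty}p_i(\mathbf b)=\min\{b_i,b_{(2)}\}.\] *)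

(* Defs.v *)
From HB Require Import structures.
From mathcomp Require Import all_boot all_order all_algebra.
From mathcomp Require Import all_classical all_reals all_analysis.
Set Implicit Arguments. Unset Strict Implicit. Unset Printing Implicit Defensive.
Import Order.TTheory GRing.Theory Num.Theory numFieldNormedType.Exports.
Local Open Scope classical_set_scope. Local Open Scope ring_scope.

Definition soft_alloc (R : realType) (n : nat) (m : R) (b : 'I_n -> R) (i : 'I_n) : R :=
  expR (m * b i) / \sum_(j < n) expR (m * b j).

Definition soft_pay (R : realType) (n : nat) (m : R) (b : 'I_n -> R) (i : 'I_n) : R :=
  b i - (\sum_(j < n) expR (m * b j)) / (m * expR (m * b i))
        * ln ((\sum_(j < n) expR (m * b j))
              / (1 + \sum_(j < n | j != i) expR (m * b j))).

(* Order statistics: [bid_stat b k] is b_(k+1), the (k+1)-th largest bid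
   (0-based index k), i.e. the k-th entry of the bids sorted decreasingly. *)
Definition bid_stat (R : realType) (n : nat) (b : 'I_n -> R) (k : nat) : R :=
  nth 0 (sort (fun x y : R => y <= x) [seq b j | j <- enum 'I_n]) k.

(* Main.v *)
Require Import Defs.
From HB Require Import structures.
From mathcomp Require Import all_boot all_order all_algebra.
From mathcomp Require Import all_classical all_reals all_analysis.
From mathcomp Require Import ring lra.
Import Order.TTheory GRing.Theory Num.Theory numFieldNormedType.Exports.
Local Open Scope classical_set_scope. Local Open Scope ring_scope.
Lemma stats (R : realType) (n : nat) (b : 'I_n -> R)
  (hn : (2 <= n)%N) (hinj : injective b) :
  [/\ forall j, b j <= bid_stat b 0, exists i0, b i0 = bid_stat b 0,
      forall j, b j != bid_stat b 0 -> b j <= bid_stat b 1 &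
      exists j1, b j1 = bid_stat b 1 /\ bid_stat b 1 < bid_stat b 0].
Proof.
rewrite /bid_stat.
set l := sort _ _.
have hsz : size l = n by rewrite size_sort size_map size_enum_ord.
have hso : sorted (fun x y : R => y <= x) l.
  by apply: sort_sorted => x y; rewrite le_total.
have hu : uniq l by rewrite sort_uniq map_inj_uniq ?enum_uniq.
have tr : transitive (fun x y : R => y <= x) by move=> x y z h1 h2; apply: le_trans h2 h1.
have rf : reflexive (fun x y : R => y <= x) by move=> x; exact: lexx.
have mem j : b j \in l by rewrite mem_sort; apply: map_f; rewrite mem_enum.
have inl k : (k < n)%N -> exists j, b j = nth 0 l k.
  move=> hk; have : nth 0 l k \in l by rewrite mem_nth ?hsz.
  rewrite mem_sort => /mapP [j _ ->]; by exists j.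
have le0 j : b j <= nth 0 l 0.
  have hk : (index (b j) l < size l)%N by rewrite index_mem.
  have := sorted_leq_nth tr rf 0 hso 0%N (index (b j) l).
  rewrite nth_index //; apply => //; rewrite inE hsz; by case: (n) hn.
split => //.
- by apply: inl; case: (n) hn.
- move=> j hj.
  have hk : (index (b j) l < size l)%N by rewrite index_mem.
  have hk1 : (1 <= index (b j) l)%N.
    move: hj; case: (index _ _) (nth_index 0 (mem j)) => //= ->; by rewrite eqxx.
  have := sorted_leq_nth tr rf 0 hso 1%N (index (b j) l).
  rewrite nth_index //; apply => //; rewrite inE hsz //.
- have [j hj] := inl 1%N hn; exists j; split => //.
  rewrite lt_neqAle; apply/andP; split; last by rewrite -hj.
  by rewrite nth_uniq ?hsz //; case: (n) hn.
Qed.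
Lemma cvg_bound (R : realType) (f : R -> R) (L K : R) :
  (forall m, 1 <= m -> `|f m - L| <= K / m) -> f m @[m --> +oo] --> L.
Proof.
move=> H; apply/cvgrPdist_le => e e0.
have K0 : 0 <= K.
  by have := H 1 (lexx _); rewrite divr1; apply: le_trans.
near=> m.
have m1 : 1 <= m by near: m; apply: nbhs_pinfty_ge; rewrite num_real.
have mK : K / e <= m by near: m; apply: nbhs_pinfty_ge; rewrite num_real.
rewrite distrC; apply: le_trans (H m m1) _.
have m0 : 0 < m by apply: lt_le_trans m1.
by rewrite ler_pdivrMr // mulrC -ler_pdivrMr.
Unshelve. all: by end_near.
Qed.

Lemma expR_bound (R : realType) (y : R) : 0 < y -> expR (- y) * y <= 1.
Proof.
move=> y0; rewrite expRN mulrC ler_pdivrMr ?expR_gt0 // mul1r.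
by apply: le_trans (expR_ge1Dx y); rewrite lerDr.
Qed.

Lemma alloc_max_bound_old (R : realType) (x T N w : R) :
  0 < x -> 0 <= T -> T <= N * w * x -> `|x / (x + T) - 1| <= N * w.
Proof.
move=> x0 T0 hT.
have xT : 0 < x + T by lra.
have -> : x / (x + T) - 1 = - (T / (x + T)) by field; lra.
rewrite normrN ger0_norm; last by rewrite divr_ge0 // ltW.
rewrite ler_pdivrMr //.
have NW : 0 <= N * w by rewrite -(pmulr_lge0 _ x0); lra.
nra.
Qed.

Lemma alloc_nonmax_bound (R : realType) (x T e : R) :
  0 < x -> 0 <= T -> x <= e * T -> `|x / (x + T) - 0| <= e.
Proof.
move=> x0 T0 hT.
have xT : 0 < x + T by lra.
rewrite subr0 ger0_norm; last by rewrite divr_ge0 // ltW.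
rewrite ler_pdivrMr //.
have e0 : 0 <= e by case: (lerP 0 e) => // h; nra.
nra.
Qed.

Lemma pay_nonmax (R : realType) (x T m c : R) :
  0 < m -> 1 <= x -> x <= T ->
  `|c - (x + T) / (m * x) * ln ((x + T) / (1 + T)) - c| <= 2 / m.
Proof.
move=> m0 x1 xT.
have T0 : 0 < 1 + T by lra.
have q1 : 1 <= (x + T) / (1 + T) by rewrite ler_pdivlMr //; lra.
have l0 := ln_ge0 q1.
have lu : ln ((x + T) / (1 + T)) <= (x - 1) / (1 + T).
  have -> : (x - 1) / (1 + T) = (x + T) / (1 + T) - 1 by field; lra.
  have := @le_ln1Dx _ ((x + T) / (1 + T) - 1).
  have -> : 1 + ((x + T) / (1 + T) - 1) = (x + T) / (1 + T) by ring.
  apply; lra.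
have D0 : 0 <= (x + T) / (m * x) by apply: divr_ge0; [lra | apply: mulr_ge0; lra].
have -> : c - (x + T) / (m * x) * ln ((x + T) / (1 + T)) - c =
   - ((x + T) / (m * x) * ln ((x + T) / (1 + T))) by ring.
rewrite normrN ger0_norm; last exact: mulr_ge0.
apply: le_trans (ler_wpM2l D0 lu) _.
have -> : (x + T) / (m * x) * ((x - 1) / (1 + T)) = ((x + T) * (x - 1)) / (m * x * (1 + T)).
  by field; apply/and3P; split; apply/negP => /eqP; lra.
rewrite ler_pdivrMr; last by rewrite !mulr_gt0 //; lra.
have -> : 2 / m * (m * x * (1 + T)) = 2 * x * (1 + T) by field; lra.
nra.
Qed.

Lemma pay_max (R : realType) (x T m c l L N bi : R) :
  1 <= m -> 0 < c -> 0 < x -> 0 <= T -> T * (m * c) <= N * x -> 0 <= L ->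
  m * c - L <= l -> l <= m * c + L ->
  `|bi - (x + T) / (m * x) * l - (bi - c)| <= (L + N / c * (c + L)) / m.
Proof.
move=> m1 c0 x0 T0 hT L0 hl1 hl2.
have m0 : 0 < m by lra.
set a := T / x.
have a0 : 0 <= a by rewrite divr_ge0 // ltW.
have Ta : T = a * x by rewrite /a mulrVK //; apply: unitf_gt0.
set k := N / c.
have Nk : N = k * c by rewrite /k mulrVK //; apply: unitf_gt0.
have ha : a * m <= k.
  rewrite Ta Nk in hT.
  have : (a * m) * (c * x) <= k * (c * x) by nra.
  by rewrite ler_pM2r // mulr_gt0.
set B := l / m.
have lB : l = B * m by rewrite /B mulrVK //; apply: unitf_gt0.
have -> : bi - (x + T) / (m * x) * l - (bi - c) = c - (1 + a) * B.
  rewrite Ta lB; field; apply/andP; split; apply/negP => /eqP; lra.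
rewrite ler_pdivlMr //.
have -> : `|c - (1 + a) * B| * m = `|(c - (1 + a) * B) * m| by rewrite normrM (ger0_norm (ltW m0)).
rewrite lB in hl1 hl2.
have hB1 : B <= c + L by nra.
have hB2 : - (c + L) <= B by nra.
have k0 : 0 <= k by nra.
have am0 : 0 <= a * m by apply: mulr_ge0; lra.
have h1 : 0 <= (c + L - B) * (a * m) by apply: mulr_ge0; lra.
have h2 : 0 <= (k - a * m) * (c + L) by apply: mulr_ge0; lra.
have h3 : 0 <= (B + c + L) * (a * m) by apply: mulr_ge0; lra.
rewrite ler_norml; apply/andP; split; nra.
Qed.

Lemma sum_one (R : realType) n (F : 'I_n -> R) (P : pred 'I_n) k :
  P k -> (forall j, 0 <= F j) -> F k <= \sum_(j | P j) F j.
Proof. by move=> Pk F0; rewrite (bigD1 k) //= lerDl sumr_ge0. Qed.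

Lemma sum_le_const (R : realType) n (F : 'I_n -> R) (P : pred 'I_n) c :
  (forall j, P j -> F j <= c) -> 0 <= c -> \sum_(j | P j) F j <= c * n%:R.
Proof.
move=> H c0; apply: le_trans (ler_sum _ H) _.
apply: (@le_trans _ _ (\sum_(j < n) c)).
  by rewrite [X in _ <= X](bigID P) /= lerDl sumr_ge0.
by rewrite sumr_const card_ord mulr_natr.
Qed.

Lemma alloc_max_bound (R : realType) (x T N c m : R) :
  0 < x -> 0 <= T -> 0 < c -> 0 < m -> T * (m * c) <= N * x ->
  `|x / (x + T) - 1| <= N / c / m.
Proof.
move=> x0 T0 c0 m0 hT.
have xT : 0 < x + T by lra.
have -> : x / (x + T) - 1 = - (T / (x + T)) by field; lra.
rewrite normrN ger0_norm; last by rewrite divr_ge0 // ltW.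
rewrite ler_pdivrMr //.
have hq : N / c / m * (m * c) = N by field; apply/andP; split; apply/negP => /eqP; lra.
have mc0 : 0 < m * c by apply: mulr_gt0.
have N0 : 0 <= N.
  have : 0 <= N * x by apply: le_trans hT; apply: mulr_ge0 => //; apply: ltW.
  by rewrite pmulr_lge0.
have q0 : 0 <= N / c / m by rewrite !divr_ge0 // ltW.
have : T <= N / c / m * x by rewrite -(ler_pM2r mc0); have -> : N / c / m * x * (m * c) = N * x by rewrite -[in RHS]hq; ring.
nra.
Qed.
Theorem mainTheorem6 (R : realType) (n : nat) (b : 'I_n -> R)
  (hn : (2 <= n)%N) (hinj : injective b)
  (hb : forall i, 0 < b i < 1) (i : 'I_n) :
  (soft_alloc m b i @[m --> +oo] --> (if b i == bid_stat b 0 then 1 else 0 : R))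
  /\ (soft_pay m b i @[m --> +oo] --> Num.min (b i) (bid_stat b 1)).
Proof.
have [hM [i0 hi0] hs [j1 [hj1 sM]]] := @stats R n b hn hinj.
move: hM hi0 hs hj1 sM; generalize (bid_stat b 0) (bid_stat b 1) => M s hM hi0 hs hj1 sM.
have bpos j : 0 < b j by case/andP: (hb j).
have s0 : 0 < s by rewrite -hj1.
rewrite /soft_alloc /soft_pay.
have hS m : \sum_(j < n) expR (m * b j) =
   expR (m * b i) + \sum_(j < n | j != i) expR (m * b j) by rewrite (bigD1 i).
have T0 m : 0 <= \sum_(j < n | j != i) expR (m * b j) by apply: sumr_ge0 => j _; apply: expR_ge0.
have emono (m u v : R) : 0 < m -> u <= v -> expR (m * u) <= expR (m * v).
  by move=> m0 uv; rewrite ler_expR ler_pM2l.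
have E0 (j : R) : 0 <= expR j by apply: expR_ge0.
case: (eqVneq (b i) M) => hiM.
- 
  have sbi : s < b i by rewrite hiM.
  rewrite (min_r (ltW sbi)).
  pose c := b i - s.
  have c0 : 0 < c by rewrite /c subr_gt0.
  have hTs m : 0 < m -> \sum_(j < n | j != i) expR (m * b j) <= expR (m * s) * n%:R.
    move=> m0; apply: sum_le_const => // j ji; apply: emono => //; apply: hs.
    by apply/eqP => e; move/eqP: ji; apply; apply: hinj; rewrite e.
  have hTs1 m : expR (m * s) <= \sum_(j < n | j != i) expR (m * b j).
    rewrite -hj1; apply: (@sum_one R n (fun j => expR (m * b j))) => //.
    by apply/eqP => e; move: sM; rewrite -hiM -e hj1 ltxx.
  have key m : 0 < m -> expR (m * s) * (m * c) <= expR (m * b i).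
    move=> m0.
    have -> : expR (m * s) = expR (m * b i) * expR (- (m * c)) by rewrite -expRD /c; congr expR; ring.
    rewrite -mulrA; apply: ler_piMr => //; apply: expR_bound; exact: mulr_gt0.
  have hTx m : 0 < m -> (\sum_(j < n | j != i) expR (m * b j)) * (m * c) <= n%:R * expR (m * b i).
    move=> m0; have mc0 : 0 < m * c by apply: mulr_gt0.
    apply: (@le_trans _ _ (expR (m * s) * n%:R * (m * c))).
      by rewrite ler_pM2r //; apply: hTs.
    by rewrite mulrAC mulrC; apply: ler_wpM2l => //; apply: key.
  split.
  + apply: (@cvg_bound R _ _ (n%:R / c)) => m m1.
    have m0 : 0 < m by apply: lt_le_trans m1.
    rewrite hS; apply: alloc_max_bound => //; [exact: expR_gt0 | exact: hTx].
  + apply: (@cvg_bound R _ _ (ln (n.+1%:R) + n%:R / c * (c + ln (n.+1%:R)))) => m m1.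
    have m0 : 0 < m by apply: lt_le_trans m1.
    rewrite hS (_ : s = b i - c); last by rewrite /c; ring.
    apply: pay_max => //; [exact: expR_gt0 | exact: hTx | | |].
    * by apply: ln_ge0; rewrite ler1n.
    * set xx := expR (m * b i); set TT := \sum_(j < n | j != i) _.
      set es := expR (m * s); set ec := expR (m * c); set N1 := n.+1%:R.
      have hx : xx = ec * es by rewrite /xx /ec /es -expRD /c; congr expR; ring.
      have es1 : 1 <= es by rewrite /es -expR0 ler_expR mulr_ge0 // ltW.
      have ec1 : 1 <= ec by rewrite /ec -expR0 ler_expR mulr_ge0 // ltW.
      have Tes : es <= TT := hTs1 m.
      have Tn : TT <= es * n%:R := hTs m m0.
      have N1e : N1 = n%:R + 1 by rewrite /N1 -natr1.
      have n0 : 0 <= (n%:R : R) by [].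
      have N0 : 0 < N1 by rewrite /N1 ltr0n.
      have T1 : 0 < 1 + TT by lra.
      have x0 : 0 < xx := expR_gt0 _.
      have ec0 : 0 < ec := expR_gt0 _.
      have q0 : 0 < (xx + TT) / (1 + TT) by rewrite divr_gt0 //; lra.
      have -> : m * c - ln N1 = ln (ec / N1) by rewrite ln_div ?posrE // /ec expRK.
      have ecN : 0 < ec / N1 by rewrite divr_gt0.
      rewrite ler_ln ?posrE //.
      rewrite ler_pdivrMr // -(ler_pM2r T1).
      have -> : (xx + TT) / (1 + TT) * N1 * (1 + TT) = (xx + TT) * N1 by field; lra.
      have h1 : 0 <= ec * (es * n%:R - TT) by apply: mulr_ge0; lra.
      have h2 : 0 <= ec * (es - 1) by apply: mulr_ge0; lra.
      rewrite hx N1e; nra.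
    * set xx := expR (m * b i); set TT := \sum_(j < n | j != i) _.
      set es := expR (m * s); set ec := expR (m * c); set N1 := n.+1%:R.
      have hx : xx = ec * es by rewrite /xx /ec /es -expRD /c; congr expR; ring.
      have es1 : 1 <= es by rewrite /es -expR0 ler_expR mulr_ge0 // ltW.
      have ec1 : 1 <= ec by rewrite /ec -expR0 ler_expR mulr_ge0 // ltW.
      have Tes : es <= TT := hTs1 m.
      have Tn : TT <= es * n%:R := hTs m m0.
      have N1e : N1 = n%:R + 1 by rewrite /N1 -natr1.
      have n0 : 0 <= (n%:R : R) by [].
      have N0 : 0 < N1 by rewrite /N1 ltr0n.
      have T1 : 0 < 1 + TT by lra.
      have x0 : 0 < xx := expR_gt0 _.
      have ec0 : 0 < ec := expR_gt0 _.
      have q0 : 0 < (xx + TT) / (1 + TT) by rewrite divr_gt0 //; lra.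
      have -> : m * c + ln N1 = ln (ec * N1) by rewrite lnM ?posrE // /ec expRK.
      have ecN : 0 < ec * N1 by rewrite mulr_gt0.
      rewrite ler_ln ?posrE //.
      rewrite ler_pdivrMr //.
      have h1 : 0 <= (ec - 1) * (es * n%:R) by apply: mulr_ge0; nra.
      have h2 : 0 <= ec * N1 * (1 + TT - es) by apply: mulr_ge0; nra.
      rewrite hx N1e; rewrite N1e in h2; nra.
- rewrite (min_l (hs i hiM)).
  have biM : b i < M by rewrite lt_neqAle hiM hM.
  pose d := M - b i.
  have d0 : 0 < d by rewrite /d subr_gt0.
  have hTM m : expR (m * M) <= \sum_(j < n | j != i) expR (m * b j).
    rewrite -hi0; apply: (@sum_one R n (fun j => expR (m * b j))) => //.
    by apply/eqP => e; move: hiM; rewrite -hi0 e eqxx.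
  have xM m : 0 < m -> expR (m * b i) <= expR (m * M) by move=> m0; apply: emono => //; apply: ltW.
  split.
  + apply: (@cvg_bound R _ _ (1 / d)) => m m1.
    have m0 : 0 < m by apply: lt_le_trans m1.
    rewrite hS; apply: alloc_nonmax_bound => //; first exact: expR_gt0.
    have -> : expR (m * b i) = expR (m * M) * expR (- (m * d)) by rewrite -expRD /d; congr expR; ring.
    have md0 : 0 < m * d by apply: mulr_gt0.
    have e1 : expR (- (m * d)) <= 1 / d / m.
      rewrite -(ler_pM2r md0).
      have -> : 1 / d / m * (m * d) = 1 by field; apply/andP; split; apply/negP => /eqP; lra.
      exact: expR_bound.
    rewrite mulrC; apply: ler_pM => //; exact: hTM.
  + apply: (@cvg_bound R _ _ (2)) => m m1.
    have m0 : 0 < m by apply: lt_le_trans m1.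
    rewrite hS; apply: pay_nonmax => //.
    * by apply: le_trans (expR_ge1Dx _); rewrite lerDl mulr_ge0 // ltW.
    * exact: le_trans (xM m m0) (hTM m).
Qed.
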